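(* Let $q$ be a power of the prime $p$ and $n$ a positive integer. Let $h\in \mathbb{F}_q[x]$ and $f, k\in\mathbb{F}_{q^n}[x]$ with $k(\mathbb{F}_q)\subseteq \mathbb{F}_q^*$, and let $P(x)=f(\mathrm{Tr}_{q^n/q}(x))+k(\mathrm{Tr}_{q^n/q}(x))\cdot L_h(x)$. Then $P$ is a permutation polynomial of $\mathbb{F}_{q^n}$ if and only if: (1) $\gcd\left(h(x), \frac{x^n-1}{x-1}\right)=1$; and (2) $Q(x):=T_n[f](x)+k(x)\cdot h(1)\cdot x$ induces a permutation of $\mathbb{F}_q$. Moreover, in this case, if $R\in\mathbb{F}_q[x]$ induces the inverse permutation of $Q$ on $\mathbb{F}_q$, then the inverse of the permutation of $\mathbb{F}_{q^n}$ induced by $P$ is induced by $$P_0(x)=F(\mathrm{Tr}_{q^n/q}(x))+k(R(\mathrm{Tr}_{q^n/q}(x)))^{q-2}\cdot L_H(x),$$ where $H\in \mathbb{F}_q[x]$ and $F\in \mathbb{F}_{q^n}[x]$ are as follows: (i) if $p\mid n$: $H$ is the unique polynomial of degree at most $n-1$ with $h(x)H(x)\equiv 1\pmod{x^n-1}$ (such $H$ exists, since when $p\mid n$ condition (1) is equivalent to $\gcd(h(x),x^n-1)=1$), and $F$ is any polynomial with $F(x)\equiv -k(R(x))^{q-2}\cdot L_H(f(R(x)))\pmod{x^q-x}$; (ii) if $p\nmid n$: $H$ is the unique polynomial of degree at most $n-2$ with $h(x)H(x)\equiv 1\pmod{\frac{x^n-1}{x-1}}$, and $F$ is any polynomial with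 $F(x)\equiv M(R(x))\pmod{x^q-x}$, where $M(x)=-k(x)^{q-2}\cdot L_H(f(x))+x\cdot\frac{1-h(1)H(1)}{n}$.
   Context: For $u(x)=\sum_{i=0}^m a_i x^i\in\mathbb{F}_q[x]$, its linearized $q$-associate is $L_u(x)=\sum_{i=0}^m a_i x^{q^i}$. $\mathrm{Tr}_{q^n/q}(x)=x+x^q+\cdots+x^{q^{n-1}}$ is the trace polynomial. For $f(x)=\sum_{i=0}^d a_i x^i\in\mathbb{F}_{q^n}[x]$, define $T_n[f](x)=\sum_{i=0}^d \mathrm{Tr}_{q^n/q}(a_i)x^i\in\mathbb{F}_q[x]$. A permutation polynomial of a finite field is a polynomial inducing a bijection of it. *)

(* Defs.v *)
From mathcomp Require Import all_boot all_order all_algebra all_field.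
Set Implicit Arguments. Unset Strict Implicit. Unset Printing Implicit Defensive.
Import GRing.Theory.
Local Open Scope ring_scope.

(* Ambient field L plays the role of F_{q^n}; F_q is the subfield of fixed
   points of x |-> x^q. *)
Section Defs.
Variable L : finFieldType.

Definition Fq (q : nat) : {pred L} := [pred x : L | x ^+ q == x].

Definition trace (q n : nat) (x : L) : L := \sum_(i < n) x ^+ (q ^ i).

Definition linq (q : nat) (u : {poly L}) : {poly L} :=
  \sum_(i < size u) u`_i *: 'X^(q ^ i).

Definition Tn (q n : nat) (f : {poly L}) : {poly L} :=
  \poly_(i < size f) trace q n f`_i.

Definition perm_on_set (S : {pred L}) (u : {poly L}) : Prop :=
  {in S, forall x, u.[x] \in S} /\ {in S &, injective (fun x => u.[x])}.

Definition is_pp (u : {poly L}) : Prop := injective (fun x => u.[x]).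
End Defs.

(* Main.v *)
From HB Require Import structures.
From mathcomp Require Import ring.
Require Import Defs.
From mathcomp Require Import all_boot all_order all_algebra all_field.
Import GRing.Theory.
Local Open Scope ring_scope.

Definition frobe (L : finFieldType) (e : nat) (he : [pchar L].-nat e) (x : L) := x ^+ e.

Lemma frobe_nmod (L : finFieldType) e he : nmod_morphism (@frobe L e he).
Proof. split; rewrite /frobe; first by rewrite expr0n; case: e he => // /pnatP []. 
  by move=> x y; rewrite exprDn_pchar. Qed.
Lemma frobe_monoid (L : finFieldType) e he : monoid_morphism (@frobe L e he).
Proof. by split; rewrite /frobe ?expr1n // => x y; rewrite exprMn. Qed.
HB.instance Definition _ (L : finFieldType) e he := GRing.isNmodMorphism.Build L L (@frobe L e he) (@frobe_nmod L e he).
HB.instance Definition _ (L : finFieldType) e he := GRing.isMonoidMorphism.Build L L (@frobe L e he) (@frobe_monoid L e he).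

Section Main.
Variables (L : finFieldType) (p m q n : nat).
Implicit Types (x y : L) (u v a b e f k h : {poly L}) (t : L).
Hypotheses (hp : prime p) (hchar : p \in [pchar L]) (hm : (0 < m)%N) (hq : q = (p ^ m)%N)
  (hn : (0 < n)%N) (hL : #|L| = (q ^ n)%N).

Lemma q_gt1 : (1 < q)%N.
Proof. by rewrite hq -(expn0 p) ltn_exp2l ?prime_gt1. Qed.
Lemma q_gt0 : (0 < q)%N. Proof. exact: ltnW q_gt1. Qed.

Lemma qi_nat i : [pchar L].-nat (q ^ i)%N.
Proof.
rewrite hq -expnM pnatX; apply/orP; left.
apply: sub_in_pnat (pnat_id hp) => r _; rewrite inE => /eqP ->. done.
Qed.

Definition fr i : {rmorphism L -> L} := @frobe L _ (qi_nat i).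
Lemma frE i x : fr i x = x ^+ (q ^ i)%N. Proof. by []. Qed.

Lemma expqD i x y : (x + y) ^+ (q ^ i)%N = x ^+ (q ^ i)%N + y ^+ (q ^ i)%N.
Proof. by rewrite -!frE rmorphD. Qed.
Lemma expqN i x : (- x) ^+ (q ^ i)%N = - x ^+ (q ^ i)%N.
Proof. by rewrite -!frE rmorphN. Qed.
Lemma expq_sum i I (r : seq I) (P : pred I) (F : I -> L) :
  (\sum_(j <- r | P j) F j) ^+ (q ^ i)%N = \sum_(j <- r | P j) F j ^+ (q ^ i)%N.
Proof. by rewrite -frE rmorph_sum. Qed.

Lemma expqn x : x ^+ (q ^ n)%N = x.
Proof. by rewrite -hL expf_card. Qed.

Definition inFq (x : L) := x ^+ q = x.

Lemma inFqP x : reflect (inFq x) (x \in Fq q).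
Proof. by rewrite /Fq inE; apply: eqP. Qed.

Lemma Fq_expi i x : inFq x -> x ^+ (q ^ i)%N = x.
Proof. move=> hx; elim: i => [|i IH]; first by rewrite expn0 expr1.
by rewrite expnSr exprM IH hx. Qed.

Lemma Fq0 : inFq 0. Proof. by rewrite /inFq expr0n; case: q q_gt0. Qed.
Lemma Fq1 : inFq 1. Proof. by rewrite /inFq expr1n. Qed.
Lemma FqD x y : inFq x -> inFq y -> inFq (x + y).
Proof. by move=> hx hy; rewrite /inFq -(expn1 q) expqD expn1 hx hy. Qed.
Lemma FqN x : inFq x -> inFq (- x).
Proof. by move=> hx; rewrite /inFq -(expn1 q) expqN expn1 hx. Qed.
Lemma FqM x y : inFq x -> inFq y -> inFq (x * y).
Proof. by move=> hx hy; rewrite /inFq exprMn hx hy. Qed.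
Lemma FqX x (k : nat) : inFq x -> inFq (x ^+ k).
Proof. by move=> hx; rewrite /inFq -exprM mulnC exprM hx. Qed.
Lemma FqV x : inFq x -> inFq (x^-1).
Proof. by move=> hx; rewrite /inFq exprVn hx. Qed.
Lemma Fq_sum I (r : seq I) (P : pred I) (F : I -> L) :
  (forall i, P i -> inFq (F i)) -> inFq (\sum_(j <- r | P j) F j).
Proof. move=> H; apply: (big_ind inFq) => //; [exact: Fq0 | exact: FqD]. Qed.
Lemma Fq_nat (k : nat) : inFq k%:R.
Proof. elim: k => [|k IH]; first exact: Fq0. by rewrite -addn1 natrD; apply: FqD => //; exact: Fq1. Qed.


Definition lin (u : {poly L}) x := \sum_(i < size u) u`_i * x ^+ (q ^ i)%N.
Definition overFq (u : {poly L}) := forall i, inFq u`_i.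

Lemma overFqP u : u \is a polyOver (Fq q) -> overFq u.
Proof.
move=> hu i; have /allP H : all (mem (Fq q)) u by exact: hu.
have [hi|hi] := ltnP i (size u); first by apply/inFqP; apply: H; exact: mem_nth.
by rewrite nth_default //; exact: Fq0.
Qed.

Lemma linE u x : (linq q u).[x] = lin u x.
Proof. rewrite /linq horner_sum; apply: eq_bigr => i _. by rewrite hornerZ hornerXn. Qed.

Lemma lin_widen N u x : (size u <= N)%N -> lin u x = \sum_(i < N) u`_i * x ^+ (q ^ i)%N.
Proof.
move=> hN; rewrite /lin (big_ord_widen N (fun i => u`_i * x ^+ (q ^ i)%N) hN).
rewrite [RHS](bigID (fun i : 'I_N => (i < size u)%N)) /= [X in _ = _ + X]big1 ?addr0 //.
by move=> i; rewrite -leqNgt => hi; rewrite nth_default ?mul0r.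
Qed.

Lemma lin0 x : lin 0 x = 0. Proof. by rewrite /lin size_poly0 big_ord0. Qed.

Lemma linD u v x : lin (u + v) x = lin u x + lin v x.
Proof.
set N := maxn (size u) (size v).
rewrite (@lin_widen N (u + v)); last by apply: leq_trans (size_polyD _ _) _.
rewrite (@lin_widen N u) ?leq_maxl // (@lin_widen N v) ?leq_maxr //.
by rewrite -big_split; apply: eq_bigr => i _; rewrite coefD mulrDl.
Qed.

Lemma linZ c u x : lin (c *: u) x = c * lin u x.
Proof.
rewrite (@lin_widen (size u)) ?size_scale_leq // /lin mulr_sumr.
by apply: eq_bigr => i _; rewrite coefZ mulrA.
Qed.

Lemma linN u x : lin (- u) x = - lin u x.
Proof. by rewrite -scaleN1r linZ mulN1r. Qed.

Lemma linB u v x : lin (u - v) x = lin u x - lin v x.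
Proof. by rewrite linD linN. Qed.

Lemma lin_sum I (r : seq I) (P : pred I) (F : I -> {poly L}) x :
  lin (\sum_(j <- r | P j) F j) x = \sum_(j <- r | P j) lin (F j) x.
Proof. by apply: (big_morph (fun u => lin u x)); [move=> u v; exact: linD | exact: lin0]. Qed.

Lemma linC c x : lin c%:P x = c * x.
Proof.
rewrite (@lin_widen 1) ?size_polyC ?leq_b1 // big_ord1 coefC /=.
by rewrite expn0 expr1.
Qed.

Lemma lin_argD u x y : lin u (x + y) = lin u x + lin u y.
Proof. by rewrite /lin -big_split; apply: eq_bigr => i _; rewrite expqD mulrDr. Qed.

Lemma lin_arg0 u : lin u 0 = 0.
Proof.
rewrite /lin big1 // => i _; rewrite expr0n expn_eq0 (negbTE (lt0n_neq0 q_gt0)) /=.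
by rewrite mulr0.
Qed.

Lemma lin_argN u x : lin u (- x) = - lin u x.
Proof. by apply/eqP; rewrite -subr_eq0 opprK -lin_argD addNr lin_arg0. Qed.

Lemma lin_argB u x y : lin u (x - y) = lin u x - lin u y.
Proof. by rewrite lin_argD lin_argN. Qed.

Lemma lin_argZ u c x : inFq c -> lin u (c * x) = c * lin u x.
Proof.
move=> hc; rewrite /lin mulr_sumr; apply: eq_bigr => i _.
rewrite exprMn (Fq_expi i _ hc). ring. Qed.

Lemma lin_Fq u t : inFq t -> lin u t = u.[1] * t.
Proof.
move=> ht; rewrite horner_coef /lin mulr_suml; apply: eq_bigr => i _.
by rewrite Fq_expi // expr1n mulr1.
Qed.

Lemma lin_mulX u y : lin (u * 'X) y = lin u (y ^+ q).
Proof.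
have [->|u0] := eqVneq u 0; first by rewrite mul0r !lin0.
rewrite (@lin_widen (size u).+1); last by rewrite size_mulX.
rewrite big_ord_recl coefMX /= mul0r add0r /lin; apply: eq_bigr => i _.
rewrite coefMX /= /bump /= add1n expnS add0n -!exprM mulnC. done.
Qed.

Lemma lin_expq u x : overFq u -> (lin u x) ^+ q = lin u (x ^+ q).
Proof.
move=> hu; rewrite -(expn1 q) /lin expq_sum; apply: eq_bigr => i _.
by rewrite exprMn expn1 hu -!exprM mulnC.
Qed.

Lemma overFqXM b : overFq b -> overFq ('X * b).
Proof. by move=> hb i; rewrite coefXM; case: ifP => _ //; exact: Fq0. Qed.

Lemma lin_comp a b x : overFq b -> lin (a * b) x = lin a (lin b x).
Proof.
elim/poly_ind: a b => [|a c IH] b hb; first by rewrite mul0r !lin0.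
rewrite mulrDl -mulrA linD IH; last exact: overFqXM.
rewrite mul_polyC linZ linD linC lin_mulX.
by rewrite mulrC lin_mulX lin_expq.
Qed.

Lemma linXn i x : lin 'X^i x = x ^+ (q ^ i)%N.
Proof.
elim: i x => [|i IH] x; first by rewrite expr0 -[1]/(1%:P) linC mul1r expn0 expr1.
by rewrite exprSr lin_mulX IH expnS -!exprM mulnC.
Qed.

Lemma lin_Xn1 x : lin ('X^n - 1) x = 0.
Proof. by rewrite linB linXn expqn -[1]/(1%:P) linC mul1r subrr. Qed.


Notation tr := (@trace L q n).
Definition Phi : {poly L} := \sum_(i < n) 'X^i.

Lemma linPhi x : lin Phi x = tr x.
Proof. by rewrite /Phi lin_sum; apply: eq_bigr => i _; rewrite linXn. Qed.

Lemma overFqPhi : overFq Phi.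
Proof. move=> j; rewrite /Phi coef_sum; apply: Fq_sum => i _; rewrite coefXn; exact: Fq_nat. Qed.

Lemma Xn1E : 'X^n - 1 = ('X - 1) * Phi.
Proof. by rewrite /Phi subrX1. Qed.

Lemma PhiE : Phi = ('X^n - 1) %/ ('X - 1).
Proof. by rewrite Xn1E mulKp // -size_poly_eq0 -[1]/(1%:P) size_XsubC. Qed.

Lemma trT x : (\sum_(i < n) 'X^(q ^ i)%N).[x] = tr x.
Proof. by rewrite horner_sum; apply: eq_bigr => i _; rewrite hornerXn. Qed.

Lemma trFq x : inFq (tr x).
Proof.
rewrite /inFq /trace -(expn1 q) expq_sum expn1.
case: n hn (expqn x) => [//|n'] _ hx.
rewrite [LHS]big_ord_recr [RHS]big_ord_recl /= expn0 expr1 [RHS]addrC; congr (_ + _).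
  by apply: eq_bigr => i _; rewrite -exprM -expnSr.
by rewrite -exprM -expnSr hx.
Qed.


Lemma trD x y : tr (x + y) = tr x + tr y.
Proof. by rewrite -!linPhi lin_argD. Qed.
Lemma tr0 : tr 0 = 0.
Proof. by rewrite -!linPhi lin_arg0. Qed.
Lemma trB x y : tr (x - y) = tr x - tr y.
Proof. by rewrite -!linPhi lin_argB. Qed.
Lemma trZ c x : inFq c -> tr (c * x) = c * tr x.
Proof. by move=> hc; rewrite -!linPhi lin_argZ. Qed.

Lemma tr_sum I (r : seq I) (P : pred I) (F : I -> L) :
  tr (\sum_(j <- r | P j) F j) = \sum_(j <- r | P j) tr (F j).
Proof. by apply: (big_morph tr); [exact: trD | exact: tr0]. Qed.

Lemma tr_lin h x : overFq h -> tr (lin h x) = h.[1] * tr x.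
Proof.
move=> hh; rewrite -!linPhi -lin_comp // mulrC lin_comp; last exact: overFqPhi.
by rewrite lin_Fq // linPhi; exact: trFq.
Qed.

Lemma tr_horner f t : inFq t -> tr f.[t] = (Tn q n f).[t].
Proof.
move=> ht; rewrite horner_coef /Tn horner_poly tr_sum; apply: eq_bigr => i _.
by rewrite mulrC trZ; [rewrite mulrC | exact: FqX].
Qed.


Lemma card_roots (P : {poly L}) (A : {set L}) :
  P != 0 -> {in A, forall x, root P x} -> (#|A| < size P)%N.
Proof.
move=> P0 hA; rewrite cardE; apply: max_poly_roots P0 _ (enum_uniq _).
by apply/allP => x; rewrite mem_enum; exact: hA.
Qed.

Definition LP (c : nat -> L) N : {poly L} := \sum_(i < N) c i *: 'X^(q ^ i)%N.

Lemma size_LP c N : (size (LP c N) <= (q ^ N.-1).+1)%N.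
Proof.
apply: leq_trans (size_sum _ _ _) _; apply/bigmax_leqP => i _.
apply: leq_trans (size_scale_leq _ _) _; rewrite size_polyXn ltnS leq_exp2l ?q_gt1 //.
by rewrite -ltnS; apply: leq_trans (ltn_ord i) (leqSpred N).
Qed.

Lemma coef_LP c N j : (j < N)%N -> (LP c N)`_(q ^ j)%N = c j.
Proof.
move=> jN; rewrite /LP coef_sum (bigD1 (Ordinal jN)) //= coefZ coefXn eqxx mulr1.
rewrite big1 ?addr0 // => i hi; rewrite coefZ coefXn eqn_exp2l ?q_gt1 //.
by rewrite (_ : (j == i) = false) ?mulr0 //; apply/negbTE; move: hi; rewrite eq_sym.
Qed.

Lemma linqE e : linq q e = LP (fun i => e`_i) (size e).
Proof. by []. Qed.

Lemma nonroot e : e != 0 -> (size e <= n)%N -> exists z, lin e z != 0.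
Proof.
move=> e0 se; case: (pickP (fun z => lin e z != 0)) => [z hz|H]; first by exists z.
exfalso.
have P0 : linq q e != 0.
  apply/eqP => /(congr1 (fun P : {poly L} => P`_(q ^ (size e).-1)%N)).
  rewrite linqE coef_LP ?coef0; last by rewrite prednK ?lt0n ?size_poly_eq0.
  by move/eqP; rewrite -/(lead_coef e) lead_coef_eq0 (negbTE e0).
have := @card_roots _ [set: L] P0.
have -> : #|[set: L]| = (q ^ n)%N by rewrite cardsT hL.
have hr : {in [set: L], forall x, root (linq q e) x}.
  by move=> x _; rewrite /root linE; move: (H x) => /negbFE.
move=> /(_ hr) /leq_trans /(_ (size_LP _ _)).
rewrite ltnS => H2.
have : (q ^ n <= q ^ n.-1)%N.
  apply: leq_trans H2 _; rewrite leq_exp2l ?q_gt1 //.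
  by rewrite -ltnS prednK ?lt0n ?size_poly_eq0 // (leq_trans se) // leqSpred.
by rewrite leqNgt ltn_exp2l ?q_gt1 // prednK // leqnn.
Qed.


Definition FqS : {set L} := [set x | x \in Fq q].

Lemma card_FqS : (#|FqS| <= q)%N.
Proof.
have hs : size ('X^q - 'X : {poly L}) = q.+1.
  by rewrite size_polyDl ?size_polyXn // size_polyN size_polyX ltnS q_gt1.
have P0 : ('X^q - 'X : {poly L}) != 0 by rewrite -size_poly_eq0 hs.
rewrite -ltnS -hs; apply: card_roots P0 _ => x; rewrite inE => /inFqP hx.
by rewrite /root !hornerE hx subrr.
Qed.

Definition KerS : {set L} := [set x | tr x == 0].

Lemma card_KerS : (#|KerS| <= q ^ n.-1)%N.
Proof.
have hT : (\sum_(i < n) 'X^(q ^ i)%N : {poly L}) = LP (fun _ => 1) n.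
  by apply: eq_bigr => i _; rewrite scale1r.
have P0 : LP (fun _ => 1) n != 0.
  apply/eqP => /(congr1 (fun P : {poly L} => P`_(q ^ n.-1)%N)).
  by rewrite coef_LP ?coef0 ?prednK //; move/eqP; rewrite oner_eq0.
rewrite -ltnS; apply: leq_trans (size_LP _ _); apply: card_roots P0 _ => x.
by rewrite inE /root -hT trT.
Qed.

Lemma tr_surj t : inFq t -> exists x, tr x = t.
Proof.
move=> ht.
pose I := [set tr x | x : L].
pose c := fun s => odflt 0 [pick x | tr x == s].
have hc x : tr (c (tr x)) = tr x.
  rewrite /c; case: pickP => [y /eqP //|/(_ x)]; by rewrite eqxx.
pose g := fun x => (tr x, x - c (tr x)).
have ginj : injective g.
  move=> x y [] hxy; rewrite hxy => /eqP; rewrite (can2_eq (subrK _) (addrK _)).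
  by rewrite subrK => /eqP.
have sub : g @: [set: L] \subset setX I KerS.
  apply/subsetP => _ /imsetP [x _ ->]; rewrite inE /=; apply/andP; split.
    by apply/imsetP; exists x.
  by rewrite inE trB hc subrr.
have h1 : (q ^ n <= #|I| * q ^ n.-1)%N.
  rewrite -hL -cardsT -(card_imset _ ginj).
  apply: leq_trans (subset_leq_card sub) _; rewrite cardsX leq_mul2l card_KerS orbT //.
have h2 : (q <= #|I|)%N.
  move: h1; case: n hn => // n' _; rewrite expnS /= leq_pmul2r //.
  by rewrite expn_gt0 q_gt0.
have IF : I \subset FqS.
  by apply/subsetP => _ /imsetP [x _ ->]; rewrite inE; apply/inFqP; exact: trFq.
have eqc : #|I| = #|FqS|.
  by apply/eqP; rewrite eqn_leq subset_leq_card // (leq_trans card_FqS h2).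
have /(subset_cardP eqc) HI := IF.
have : t \in I by rewrite HI inE; apply/inFqP.
by case/imsetP => x _ ->; exists x.
Qed.


Notation sig := (fr 1).
Definition fixd u := map_poly sig u = u.

Lemma fixdP u : fixd u <-> overFq u.
Proof.
split=> [hu i|hu]; first by rewrite /inFq -{2}hu coef_map /= /frobe expn1.
by apply/polyP => i; rewrite coef_map /= /frobe expn1 hu.
Qed.

Lemma fixdXn1 : fixd ('X^n - 1).
Proof. by rewrite /fixd rmorphB /= map_polyXn rmorph1. Qed.

Lemma Phi_neq0 : Phi != 0.
Proof.
apply/eqP => H; move: Xn1E; rewrite H mulr0 => /eqP; rewrite subr_eq0 => /eqP E.
have := congr1 (fun u : {poly L} => size u) E.
by rewrite size_polyXn size_poly1; case: n hn.
Qed.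

Lemma coprime_ker h y : overFq h -> coprimep h Phi -> tr y = 0 -> lin h y = 0 -> y = 0.
Proof.
move=> hh /Bezout_coprimepP [[u1 u2] /=] /eqpP [[c1 c2] /= /andP [c10 c20]] E ty hy.
have := congr1 (fun u => lin u y) E => /=.
rewrite linZ linD lin_comp // lin_comp ?linPhi ?ty ?hy ?lin_arg0 ?addr0 ?mulr0;
  last exact: overFqPhi.
rewrite -[1]/(1%:P) linZ linC mul1r => /esym /eqP; rewrite mulf_eq0 (negbTE c20) /=.
by move/eqP.
Qed.

Lemma notcop_ker h : overFq h -> ~~ coprimep h Phi ->
  exists y, [/\ y != 0, tr y = 0 & lin h y = 0].
Proof.
move=> hh ncop.
set d := gcdp h Phi.
have d0 : d != 0 by rewrite gcdp_eq0 negb_and Phi_neq0 orbT.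
have dX : d %| 'X^n - 1 by rewrite (dvdp_trans (dvdp_gcdr _ _)) // Xn1E dvdp_mulIr.
set e := ('X^n - 1) %/ d.
have fe : overFq e.
  apply/fixdP; rewrite /fixd /e map_divp fixdXn1 gcdp_map.
  by rewrite (proj2 (fixdP h) hh) (proj2 (fixdP Phi) overFqPhi).
have ed : e * d = 'X^n - 1 by rewrite divpK.
have e0 : e != 0.
  apply/eqP => e0; move: ed; rewrite e0 mul0r => /eqP; rewrite eq_sym subr_eq0 => /eqP E.
  have := congr1 (fun u : {poly L} => size u) E.
  by rewrite size_polyXn size_poly1; case: n hn.
have sd : (1 < size d)%N.
  by rewrite ltn_neqAle eq_sym -coprimep_def ncop lt0n size_poly_eq0.
have se : (size e <= n)%N.
  have := congr1 (fun u : {poly L} => size u) ed => /=.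
  rewrite size_mul // -polyC1 size_XnsubC //.
  case: (size e) => // k; case: (size d) sd => // [[//|j]] _.
  by rewrite addSn addnS /= => [[<-]]; rewrite addnS ltnS leq_addr.
have [z hz] := @nonroot e e0 se.
have key v : d %| v -> lin v (lin e z) = 0.
  move=> dv; rewrite -lin_comp // -(divpK dv) -mulrA [d * e]mulrC ed.
  by rewrite lin_comp ?lin_Xn1 ?lin_arg0 //; apply/fixdP; exact: fixdXn1.
exists (lin e z); split => //.
  by rewrite -linPhi key // dvdp_gcdr.
by rewrite key // dvdp_gcdl.
Qed.


Definition Tp : {poly L} := \sum_(i < n) 'X^(q ^ i)%N.

Lemma Peval f k h x :
  (f \Po Tp + (k \Po Tp) * linq q h).[x] = f.[tr x] + k.[tr x] * lin h x.
Proof. by rewrite hornerD hornerM !horner_comp /Tp trT linE. Qed.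

Lemma Qeval f k h t :
  (Tn q n f + k * (h.[1])%:P * 'X).[t] = (Tn q n f).[t] + k.[t] * h.[1] * t.
Proof. by rewrite hornerD !hornerM hornerC hornerX. Qed.

Lemma trP f k h x : overFq h -> (forall t, inFq t -> inFq k.[t]) ->
  tr (f \Po Tp + (k \Po Tp) * linq q h).[x] = (Tn q n f + k * (h.[1])%:P * 'X).[tr x].
Proof.
move=> hh hk; rewrite Peval Qeval trD tr_horner; last exact: trFq.
rewrite trZ; last by apply: hk; exact: trFq.
by rewrite tr_lin // mulrA.
Qed.

Lemma part1 f k h : overFq h -> (forall t, inFq t -> inFq k.[t] /\ k.[t] != 0) ->
  let P := f \Po Tp + (k \Po Tp) * linq q h in
  let Q := Tn q n f + k * (h.[1])%:P * 'X in
  (is_pp P <-> coprimep h Phi /\ perm_on_set (Fq q) Q).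
Proof.
move=> hh hk P Q.
have hk1 t : inFq t -> inFq k.[t] by move=> /hk [].
have TP x : tr P.[x] = Q.[tr x] by rewrite trP.
split.
- move=> Pinj; split.
    apply/negP => /negP ncop; have [y [y0 ty hy]] := @notcop_ker h hh ncop.
    have : P.[y] = P.[0] by rewrite !Peval ty tr0 hy lin_arg0.
    by move/Pinj => /eqP; rewrite (negbTE y0).
  have [g gK Kg] := injF_bij Pinj.
  have QF t : t \in Fq q -> Q.[t] \in Fq q.
    move=> /inFqP /tr_surj [x <-]; rewrite -TP; apply/inFqP; exact: trFq.
  split=> //.
  have sub : FqS \subset [set Q.[t] | t in FqS].
    apply/subsetP => s; rewrite inE => /inFqP /tr_surj [y <-].
    rewrite -[y]Kg TP; apply/imsetP; exists (tr (g y)) => //.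
    by rewrite inE; apply/inFqP; exact: trFq.
  have := subset_leq_card sub; rewrite leq_eqVlt ltnNge leq_imset_card orbF eq_sym.
  move/imset_injP => H x y hx hy; apply: H; by rewrite inE.
- move=> [cop [QF Qinj]] x y E.
  have ht : tr x = tr y.
    apply: Qinj; try by apply/inFqP; exact: trFq.
    by rewrite -!TP E.
  move: E; rewrite !Peval ht => /addrI /mulfI.
  have [_ ] := hk _ (trFq y) => kn0 /(_ kn0) /eqP; rewrite -subr_eq0 -lin_argB => /eqP hl.
  apply/eqP; rewrite -subr_eq0; apply/eqP; apply: coprime_ker hh cop _ hl.
  by rewrite trB ht subrr.
Qed.


Lemma fixdM u v : fixd u -> fixd v -> fixd (u * v).
Proof. by rewrite /fixd rmorphM /= => -> ->. Qed.
Lemma fixdD u v : fixd u -> fixd v -> fixd (u + v).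
Proof. by rewrite /fixd rmorphD /= => -> ->. Qed.

Lemma inv_exists G h : overFq G -> overFq h -> G != 0 -> coprimep h G ->
  exists H, [/\ overFq H, (size H < size G)%N & (h * H) %% G = 1 %% G].
Proof.
move=> /fixdP fG /fixdP fh G0 cop.
set e := egcdp h G.
have E := egcdp_map sig h G; rewrite fh fG in E.
have fe1 : fixd e.1 by rewrite /fixd; have := congr1 fst E => /= /esym.
have fe2 : fixd e.2 by rewrite /fixd; have := congr1 snd E => /= /esym.
set w := e.1 * h + e.2 * G.
have ew : w %= 1 by rewrite eqp_sym (eqp_trans _ (egcdpE h G)) // eqp_sym gcdp_eqp1.
have fw : fixd w by apply: fixdD; apply: fixdM.
have /size_poly1P [c c0 wc] : size w == 1 by rewrite (eqp_size ew) size_poly1.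
have fc : sig c = c.
  by have := congr1 (fun u : {poly L} => u`_0) fw; rewrite coef_map wc coefC.
exists ((c^-1 *: e.1) %% G); split.
- apply/fixdP; rewrite /fixd map_modp map_polyZ fe1 fG fmorphV fc //.
- by rewrite ltn_modp.
- rewrite modp_mul mulrC -scalerAl.
  have -> : e.1 * h = c%:P - e.2 * G by rewrite -wc /w addrK.
  rewrite scalerBr -mul_polyC -polyCM mulVf // polyC1 scalerAl modpD modpN.
  by rewrite modp_mull subr0.
Qed.


Lemma kinv c : inFq c -> c != 0 -> c ^+ (q - 2) * c = 1.
Proof.
move=> hc c0; rewrite -exprSr subnSK ?q_gt1 //.
apply: (mulIf c0); rewrite mul1r -exprSr subn1 prednK ?q_gt0 //.
Qed.

Lemma root_dvd (D A : {poly L}) s : D.[s] = 0 -> D %| A -> A.[s] = 0.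
Proof. by move=> Ds /dvdpP [r ->]; rewrite hornerM Ds mulr0. Qed.

Lemma rootXq s : inFq s -> ('X^q - 'X : {poly L}).[s] = 0.
Proof. by move=> hs; rewrite !hornerE hs subrr. Qed.

Lemma core f k h H x : overFq h -> inFq k.[tr x] -> k.[tr x] != 0 ->
  k.[tr x] ^+ (q - 2) * (linq q H).[f.[tr x] + k.[tr x] * lin h x]
  = k.[tr x] ^+ (q - 2) * (linq q H).[f.[tr x]] + lin (h * H) x.
Proof.
move=> hh hk k0; rewrite !linE lin_argD lin_argZ // mulrDr mulrA kinv // mul1r.
by rewrite [h * H]mulrC lin_comp.
Qed.

Lemma overFqXn1 : overFq ('X^n - 1).
Proof. by apply/fixdP; exact: fixdXn1. Qed.

Lemma inv_div f k h R H F x : overFq h ->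
  (forall t, inFq t -> inFq k.[t] /\ k.[t] != 0) ->
  (forall t, inFq t -> R.[(Tn q n f + k * (h.[1])%:P * 'X).[t]] = t) ->
  (h * H) %% ('X^n - 1) = 1 ->
  ('X^q - 'X) %| (F + ((k \Po R) ^+ (q - 2)) * (linq q H \Po (f \Po R))) ->
  let y := (f \Po Tp + (k \Po Tp) * linq q h).[x] in
  F.[tr y] + (k.[R.[tr y]]) ^+ (q - 2) * (linq q H).[y] = x.
Proof.
move=> hh hk hR hH hF y.
have ht := trFq x; have [hk1 hk0] := hk _ ht.
have hs : tr y = (Tn q n f + k * (h.[1])%:P * 'X).[tr x].
  by rewrite /y trP // => t /hk [].
have := root_dvd _ _ _ (rootXq _ (trFq y)) hF.
rewrite hornerD hornerM horner_exp !horner_comp hs hR // => /eqP.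
rewrite addr_eq0 => /eqP ->.
rewrite /y Peval core // addrA addNr add0r.
rewrite {1}(divp_eq (h * H) ('X^n - 1)) hH linD lin_comp ?lin_Xn1 ?lin_arg0 ?add0r.
  by rewrite -polyC1 linC mul1r.
exact: overFqXn1.
Qed.


Lemma size_Phi : size Phi = n.
Proof.
have := congr1 (fun u : {poly L} => size u) Xn1E => /=.
rewrite size_mul ?Phi_neq0 -?polyC1 ?size_XnsubC ?size_XsubC //; last first.
  by rewrite -size_poly_eq0 size_XsubC.
by case=> ->.
Qed.

Lemma Phi1 : Phi.[1] = n%:R.
Proof.
rewrite /Phi horner_sum (eq_bigr (fun _ => 1)) ?sumr_const ?card_ord //.
by move=> i _; rewrite hornerXn expr1n.
Qed.

Lemma inv_ndiv f k h R (H F : {poly L}) x : overFq h ->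
  (forall t, inFq t -> inFq k.[t] /\ k.[t] != 0) ->
  (forall t, inFq t -> R.[(Tn q n f + k * (h.[1])%:P * 'X).[t]] = t) ->
  ~~ (p %| n)%N -> (size H <= n.-1)%N ->
  (h * H) %% Phi = 1 %% Phi ->
  let M := - (k ^+ (q - 2)) * (linq q H \Po f)
                 + 'X * ((1 - h.[1] * H.[1]) / n%:R)%:P in
  ('X^q - 'X) %| (F - (M \Po R)) ->
  let y := (f \Po Tp + (k \Po Tp) * linq q h).[x] in
  F.[tr y] + (k.[R.[tr y]]) ^+ (q - 2) * (linq q H).[y] = x.
Proof.
move=> hh hk hR pn sH hH M hF y.
have ht := trFq x; have [hk1 hk0] := hk _ ht.
have hs : tr y = (Tn q n f + k * (h.[1])%:P * 'X).[tr x].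
  by rewrite /y trP // => t /hk [].
have := root_dvd _ _ _ (rootXq _ (trFq y)) hF.
rewrite hornerD hornerN horner_comp hs hR // => /eqP; rewrite subr_eq0 => /eqP ->.
rewrite /M hornerD !hornerM hornerN horner_exp horner_comp hornerX hornerC.
rewrite /y Peval core // mulNr addrAC addrA addNr add0r.
set c := (1 - h.[1] * H.[1]) / n%:R.
have n0 : n%:R != 0 :> L by rewrite -(dvdn_pcharf hchar).
case: (ltnP 1 n) => n1; last first.
  have n_1 : n = 1%N by apply/eqP; rewrite eqn_leq n1 hn.
  move: sH; rewrite n_1 /= leqn0 size_poly_eq0 => /eqP H0.
  rewrite H0 mulr0 lin0 add0r /c H0 horner0 mulr0 subr0 n_1 divr1 mulr1.
  by rewrite /trace big_ord1 expn0 expr1.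
have m1 : 1 %% Phi = 1 by rewrite modp_small // size_poly1 size_Phi.
rewrite m1 in hH.
set a := (h * H) %/ Phi.
have hHE : h * H = a * Phi + 1 by rewrite {1}(divp_eq (h * H) Phi) hH.
rewrite hHE linD lin_comp ?linPhi; last exact: overFqPhi.
rewrite lin_Fq // -polyC1 linC mul1r.
suff E : c + a.[1] = 0.
  by rewrite (_ : a.[1] = - c); [ring | apply/eqP; rewrite -addr_eq0 addrC E].
have := congr1 (fun u => u.[1]) hHE => /=; rewrite hornerM hornerD hornerM Phi1 hornerC.
move=> E; rewrite /c E; field.
exact: n0.
Qed.


Lemma overFq_polyOver u : overFq u -> u \is a polyOver (Fq q).
Proof.
move=> hu; apply/allP => c /(nthP 0) [i _ <-]; apply/inFqP; exact: hu.
Qed.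

Lemma main_sec (h f k : {poly L}) (hh : h \is a polyOver (Fq q))
  (hk : {in Fq q, forall x, k.[x] \in Fq q /\ k.[x] != 0}) :
  let Tr := @trace L q n in
  let P := f \Po (\sum_(i < n) 'X^(q ^ i)) + (k \Po (\sum_(i < n) 'X^(q ^ i))) * linq q h in
  let Q := Tn q n f + k * (h.[1])%:P * 'X in
  (is_pp P <-> coprimep h (('X^n - 1) %/ ('X - 1)) /\ perm_on_set (Fq q) Q)
  /\
  (is_pp P ->
   forall R : {poly L}, R \is a polyOver (Fq q) ->
   {in Fq q, forall x, R.[x] \in Fq q /\ R.[Q.[x]] = x /\ Q.[R.[x]] = x} ->
   ((p %| n)%N -> 
      (exists H : {poly L}, [/\ H \is a polyOver (Fq q), (size H <= n)%N
         & (h * H) %% ('X^n - 1) = 1])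
      /\
      forall H F : {poly L}, H \is a polyOver (Fq q) -> (size H <= n)%N ->
        (h * H) %% ('X^n - 1) = 1 ->
        ('X^q - 'X) %| (F + ((k \Po R) ^+ (q - 2)) * (linq q H \Po (f \Po R))) ->
        forall x : L,
          (F.[Tr (P.[x])] + (k.[R.[Tr (P.[x])]]) ^+ (q - 2) * (linq q H).[P.[x]]) = x)
   /\
   (~~ (p %| n)%N ->
      (exists H : {poly L}, [/\ H \is a polyOver (Fq q), (size H <= n.-1)%N
         & (h * H) %% (('X^n - 1) %/ ('X - 1)) = 1 %% (('X^n - 1) %/ ('X - 1))])
      /\
      forall H F : {poly L}, H \is a polyOver (Fq q) -> (size H <= n.-1)%N ->
        (h * H) %% (('X^n - 1) %/ ('X - 1)) = 1 %% (('X^n - 1) %/ ('X - 1)) ->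
        let M := - (k ^+ (q - 2)) * (linq q H \Po f)
                 + 'X * ((1 - h.[1] * H.[1]) / n%:R)%:P in
        ('X^q - 'X) %| (F - (M \Po R)) ->
        forall x : L,
          (F.[Tr (P.[x])] + (k.[R.[Tr (P.[x])]]) ^+ (q - 2) * (linq q H).[P.[x]]) = x)).
Proof.
move=> Tr P Q.
have fh := overFqP h hh.
have hk' : forall t, inFq t -> inFq k.[t] /\ k.[t] != 0.
  move=> t /inFqP ht; have [a b] := hk t ht; split => //; exact/inFqP.
have P1 := part1 f k h fh hk'.
rewrite -PhiE; split; first exact: P1.
move=> Ppp R hR hRQ.
have [cop [QF Qinj]] : coprimep h Phi /\ perm_on_set (Fq q) Q by apply/P1.
have hRt : forall t, inFq t -> R.[Q.[t]] = t.
  by move=> t /inFqP ht; have [_ [-> _]] := hRQ t ht.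
split.
- move=> pn; split.
    have cop' : coprimep h ('X^n - 1).
      rewrite Xn1E coprimepMr cop andbT.
      apply: coprimep_dvdl cop; rewrite -polyC1 dvdp_XsubCl /root Phi1.
      by rewrite -(dvdn_pcharf hchar).
    have G0 : ('X^n - 1 : {poly L}) != 0.
      by rewrite -size_poly_eq0 -polyC1 size_XnsubC.
    have [H [fH sH hH]] := inv_exists _ _ overFqXn1 fh G0 cop'.
    exists H; split.
    + exact: overFq_polyOver.
    + by move: sH; rewrite -polyC1 size_XnsubC.
    + by rewrite hH modp_small // size_poly1 -polyC1 size_XnsubC.
  move=> H F hH sH hhH hF x.
  exact: (inv_div f k h R H F x fh hk' hRt hhH hF).
- move=> pn; split.
    have [H [fH sH hH]] := inv_exists _ _ overFqPhi fh Phi_neq0 cop.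
    exists H; split => //.
    + exact: overFq_polyOver.
    + by move: sH; rewrite size_Phi; case: (n) hn.
  move=> H F hH sH hhH M hF x.
  exact: (inv_ndiv f k h R H F x fh hk' hRt pn sH hhH hF).
Qed.

End Main.

Theorem theorem3p2 (L : finFieldType) (p m q n : nat)
  (hp : prime p) (hchar : p \in [pchar L]) (hm : (0 < m)%N) (hq : q = (p ^ m)%N)
  (hn : (0 < n)%N) (hL : #|L| = (q ^ n)%N)
  (h f k : {poly L}) (hh : h \is a polyOver (Fq q))
  (hk : {in Fq q, forall x, k.[x] \in Fq q /\ k.[x] != 0}) :
  let Tr := @trace L q n in
  let P := f \Po (\sum_(i < n) 'X^(q ^ i)) + (k \Po (\sum_(i < n) 'X^(q ^ i))) * linq q h in
  let Q := Tn q n f + k * (h.[1])%:P * 'X in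
  (is_pp P <-> coprimep h (('X^n - 1) %/ ('X - 1)) /\ perm_on_set (Fq q) Q)
  /\
  (is_pp P ->
   forall R : {poly L}, R \is a polyOver (Fq q) ->
   {in Fq q, forall x, R.[x] \in Fq q /\ R.[Q.[x]] = x /\ Q.[R.[x]] = x} ->
   ((p %| n)%N -> 
      (exists H : {poly L}, [/\ H \is a polyOver (Fq q), (size H <= n)%N
         & (h * H) %% ('X^n - 1) = 1])
      /\
      forall H F : {poly L}, H \is a polyOver (Fq q) -> (size H <= n)%N ->
        (h * H) %% ('X^n - 1) = 1 ->
        ('X^q - 'X) %| (F + ((k \Po R) ^+ (q - 2)) * (linq q H \Po (f \Po R))) ->
        forall x : L,
          (F.[Tr (P.[x])] + (k.[R.[Tr (P.[x])]]) ^+ (q - 2) * (linq q H).[P.[x]]) = x)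
   /\
   (~~ (p %| n)%N ->
      (exists H : {poly L}, [/\ H \is a polyOver (Fq q), (size H <= n.-1)%N
         & (h * H) %% (('X^n - 1) %/ ('X - 1)) = 1 %% (('X^n - 1) %/ ('X - 1))])
      /\
      forall H F : {poly L}, H \is a polyOver (Fq q) -> (size H <= n.-1)%N ->
        (h * H) %% (('X^n - 1) %/ ('X - 1)) = 1 %% (('X^n - 1) %/ ('X - 1)) ->
        let M := - (k ^+ (q - 2)) * (linq q H \Po f)
                 + 'X * ((1 - h.[1] * H.[1]) / n%:R)%:P in
        ('X^q - 'X) %| (F - (M \Po R)) ->
        forall x : L,
          (F.[Tr (P.[x])] + (k.[R.[Tr (P.[x])]]) ^+ (q - 2) * (linq q H).[P.[x]]) = x)).
Proof. exact: (@main_sec L p m q n hp hchar hm hq hn hL h f k hh hk). Qed.
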